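(* Let $n>4$ and let $\mathcal{L}\subseteq\mathcal{L}_n$ be a linear subspace that is a Jordan algebra, is invariant under the conjugation action of $S_n$, contains $J$, and contains $W_n:=\{Q=(q_{ij})\in\mathcal{L}_n: Q=Q^T,\ q_{ii}=0\ \forall i\}$ (the submodule isomorphic to $\{n-2,2\}$). Then $\mathrm{Symm}_n\subseteq\mathcal{L}$.
   Context: $\mathbf{1}\in\mathbb{R}^n$ is the all-ones column vector; $\mathcal{L}_n=\{Q\in \mathrm{Mat}_n(\mathbb{R}): Q\mathbf{1}=0\}$; $J:=\frac1n\mathbf{1}\mathbf{1}^T-I_n$. $\mathrm{Symm}_n$ is the space of symmetric matrices in $\mathcal{L}_n$. For $\sigma\in S_n$, $K_\sigma$ is the permutation matrix with $e_iK_\sigma=e_{\sigma(i)}$, and $S_n$ acts by $\sigma\cdot X=K_\sigma^TXK_\sigma$. A Jordan algebra is a subspace closed under $AB+BA$. *)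

(* Defs.v *)
From HB Require Import structures.
From mathcomp Require Import all_boot all_order all_algebra all_fingroup.
From mathcomp Require Import reals.
Set Implicit Arguments. Unset Strict Implicit. Unset Printing Implicit Defensive.
Import Order.TTheory GRing.Theory Num.Theory.
Local Open Scope ring_scope.

Definition ones (R : nzRingType) (n : nat) : 'cV[R]_n := const_mx 1.

Definition in_Ln (R : nzRingType) (n : nat) (Q : 'M[R]_n) : Prop :=
  Q *m ones R n = 0.

Definition Jmat (R : fieldType) (n : nat) : 'M[R]_n :=
  (n%:R)^-1 *: (ones R n *m (ones R n)^T) - 1%:M.

Definition in_Symm (R : nzRingType) (n : nat) (Q : 'M[R]_n) : Prop :=
  Q^T = Q /\ in_Ln Q.

Definition in_W (R : nzRingType) (n : nat) (Q : 'M[R]_n) : Prop :=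
  in_Symm Q /\ forall i, Q i i = 0.

(* permutation matrix K_sigma with e_i K_sigma = e_{sigma(i)} *)
Definition Kmat (R : nzRingType) (n : nat) (s : 'S_n) : 'M[R]_n := perm_mx s.

Definition perm_act (R : nzRingType) (n : nat) (s : 'S_n) (X : 'M[R]_n) : 'M[R]_n :=
  (Kmat R s)^T *m X *m Kmat R s.

Definition is_subspace (R : nzRingType) (n : nat) (L : 'M[R]_n -> Prop) : Prop :=
  L 0 /\ forall (a : R) A B, L A -> L B -> L (a *: A + B).

Definition is_jordan (R : nzRingType) (n : nat) (L : 'M[R]_n -> Prop) : Prop :=
  forall A B, L A -> L B -> L (A *m B + B *m A).

Definition Sn_invariant (R : nzRingType) (n : nat) (L : 'M[R]_n -> Prop) : Prop :=
  forall (s : 'S_n) A, L A -> L (perm_act s A).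

(* Main.v *)
Require Import Defs.
From HB Require Import structures.
From mathcomp Require Import all_boot all_order all_algebra all_fingroup.
From mathcomp Require Import reals.
From mathcomp Require Import ring.
Set Implicit Arguments. Unset Strict Implicit. Unset Printing Implicit Defensive.
Import Order.TTheory GRing.Theory Num.Theory.
Local Open Scope ring_scope.

Section Aux.
Context {R : realType}.
Context {n : nat}.

Definition ev (i : 'I_n) : 'cV[R]_n := delta_mx i 0.
Definition vd (i j : 'I_n) : 'cV[R]_n := ev i - ev j.
Definition Amat (i j k l : 'I_n) : 'M[R]_n :=
  vd i j *m (vd k l)^T + vd k l *m (vd i j)^T.
Definition Dmat (i j k l : 'I_n) : 'M[R]_n :=
  vd i j *m (vd i j)^T + vd k l *m (vd k l)^T.

Lemma vdT i j : (vd i j)^T = delta_mx 0 i - delta_mx 0 j.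
Proof. by rewrite /vd /ev linearB /= !trmx_delta. Qed.

Lemma vdE i j x : vd i j x 0 = (x == i)%:R - (x == j)%:R.
Proof. by rewrite /vd /ev !mxE !andbT. Qed.

Lemma vd_ones i j : (vd i j)^T *m ones R n = 0.
Proof. by rewrite vdT mulmxBl -!rowE /ones !row_const subrr. Qed.

Lemma d00 : delta_mx (0 : 'I_1) (0 : 'I_1) = 1%:M :> 'M[R]_1.
Proof. by apply/matrixP => a b; rewrite !ord1 !mxE. Qed.

Lemma ip_same i j : i != j -> (vd i j)^T *m vd i j = 2%:M.
Proof.
move=> hij; rewrite vdT /vd /ev mulmxBl !mulmxBr !mul_delta_mx_cond !eqxx.
rewrite (negbTE hij) eq_sym (negbTE hij) d00 /= !mulr0n subr0 sub0r opprK.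
by rewrite !mulr1n -raddfD.
Qed.

Lemma ip_orth i j k l : i != k -> i != l -> j != k -> j != l ->
  (vd i j)^T *m vd k l = 0.
Proof.
move=> h1 h2 h3 h4; rewrite vdT /vd /ev mulmxBl !mulmxBr !mul_delta_mx_cond.
by rewrite (negbTE h1) (negbTE h2) (negbTE h3) (negbTE h4) !mulr0n !subrr.
Qed.

Lemma Amat_W i j k l : i != k -> i != l -> j != k -> j != l ->
  in_W (Amat i j k l).
Proof.
move=> h1 h2 h3 h4; split; [split|].
- by rewrite /Amat linearD /= !trmx_mul !trmxK addrC.
- by rewrite /in_Ln /Amat mulmxDl -!mulmxA !vd_ones !mulmx0 addr0.
- move=> x; rewrite /Amat !mxE !big_ord1 !mxE !eqxx !andbT.
  case: (eqVneq x i) => [->|xi]; first by rewrite (negbTE h1) (negbTE h2) !subrr !mulr0 !mul0r addr0.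
  case: (eqVneq x j) => [->|xj]; first by rewrite (negbTE h3) (negbTE h4) !subrr !mulr0 !mul0r addr0.
  by rewrite subrr !mulr0 !mul0r addr0.
Qed.

Lemma AAgen (u w : 'cV[R]_n) : w^T *m u = 0 -> u^T *m w = 0 ->
  u^T *m u = 2%:M -> w^T *m w = 2%:M ->
  (u *m w^T + w *m u^T) *m (u *m w^T + w *m u^T)
  + (u *m w^T + w *m u^T) *m (u *m w^T + w *m u^T)
  = 4%:R *: (u *m u^T + w *m w^T).
Proof.
move=> wu uw uu ww.
rewrite !mulmxDl !mulmxDr !mulmxA.
rewrite -[u *m _ *m u]mulmxA -[u *m _ *m w]mulmxA.
rewrite -[w *m _ *m u]mulmxA -[w *m _ *m w]mulmxA.
rewrite uw wu uu ww !mulmx0 !mul0mx !mul_mx_scalar !add0r !addr0.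
rewrite -!scalemxAl -!scalerDr -mulr2n -scaler_nat scalerA -natrM. by [].
Qed.

Lemma AA i j k l : i != j -> k != l -> i != k -> i != l -> j != k -> j != l ->
  Amat i j k l *m Amat i j k l + Amat i j k l *m Amat i j k l = 4%:R *: Dmat i j k l.
Proof.
move=> hij hkl h1 h2 h3 h4; apply: AAgen.
- by rewrite ip_orth // eq_sym.
- exact: ip_orth.
- exact: ip_same.
- exact: ip_same.
Qed.

Lemma Dmat_sym i j k l : (Dmat i j k l)^T = Dmat i j k l.
Proof. by rewrite /Dmat linearD /= !trmx_mul !trmxK. Qed.

Lemma Dmat_diag i j k l x : i != j -> k != l ->
  Dmat i j k l x x = (x == i)%:R + (x == j)%:R + (x == k)%:R + (x == l)%:R.
Proof.
move=> hij hkl; rewrite /Dmat !mxE !big_ord1 !mxE !eqxx !andbT.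
have sq : forall a b : 'I_n, a != b ->
   ((x == a)%:R - (x == b)%:R) * ((x == a)%:R - (x == b)%:R) = (x == a)%:R + (x == b)%:R :> R.
  move=> a b hab; case: (eqVneq x a) => [->|xa]; first by rewrite (negbTE hab) subr0 mulr1 addr0.
  case: (eqVneq x b) => [_|xb]; first by rewrite sub0r mulrNN mulr1 add0r.
  by rewrite subrr mulr0 addr0.
by rewrite (sq _ _ hij) (sq _ _ hkl) addrA.
Qed.

Lemma perm_actE (s : 'S_n) (X : 'M[R]_n) x y :
  perm_act s X x y = X (s^-1 x)%g (s^-1 y)%g.
Proof.
have -> : perm_act s X = row_perm s^-1 (col_perm s^-1 X).
  by rewrite /perm_act /Kmat row_permE col_permE invgK tr_perm_mx mulmxA.
by rewrite !mxE.
Qed.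

Lemma perm_act_sym (s : 'S_n) (X : 'M[R]_n) : X^T = X -> (perm_act s X)^T = perm_act s X.
Proof. by move=> hX; rewrite /perm_act !trmx_mul trmxK hX mulmxA. Qed.
Definition Dl (i j k l : 'I_n) : 'M[R]_n := locked (Dmat i j k l).
Lemma DlE i j k l : Dl i j k l = Dmat i j k l. Proof. by rewrite /Dl -lock. Qed.
Lemma Dl_sym i j k l : (Dl i j k l)^T = Dl i j k l.
Proof. by rewrite DlE Dmat_sym. Qed.
Lemma Dl_diag i j k l x : i != j -> k != l ->
  Dl i j k l x x = (x == i)%:R + (x == j)%:R + (x == k)%:R + (x == l)%:R.
Proof. by rewrite DlE; exact: Dmat_diag. Qed.
End Aux.

Theorem mainTheorem15 (R : realType) (n : nat) (L : 'M[R]_n -> Prop) :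
  (4 < n)%N ->
  is_subspace L ->
  (forall Q, L Q -> in_Ln Q) ->
  is_jordan L ->
  Sn_invariant L ->
  L (Jmat R n) ->
  (forall Q, in_W Q -> L Q) ->
  forall Q, in_Symm Q -> L Q.
Proof.
move=> n4 [L0 Lc] LLn LJ Lperm _ LW.
have LZ : forall a A, L A -> L (a *: A).
  by move=> a A hA; rewrite -[_ *: _]addr0; apply: Lc.
have LD : forall A B, L A -> L B -> L (A + B).
  by move=> A B hA hB; rewrite -[A]scale1r; apply: Lc.
have LB : forall A B, L A -> L B -> L (A - B).
  by move=> A B hA hB; rewrite addrC -scaleN1r; apply: Lc.
have Lsum : forall (I : finType) (F : I -> 'M[R]_n), (forall i, L (F i)) -> L (\sum_i F i).
  move=> I F hF; apply: (big_ind L) => //; exact: LD.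
have LDm : forall i j k l : 'I_n, i != j -> k != l -> i != k -> i != l -> j != k -> j != l ->
    L (Dl i j k l).
  move=> i j k l hij hkl h1 h2 h3 h4.
  have := LJ _ _ (LW _ (Amat_W h1 h2 h3 h4)) (LW _ (Amat_W h1 h2 h3 h4)).
  rewrite DlE; rewrite AA // => /(LZ 4%:R^-1); rewrite scalerA mulVf ?scale1r //.
  by rewrite pnatr_eq0.
have o0 : (0 < n)%N by apply: leq_ltn_trans n4.
have o1 : (1 < n)%N by apply: leq_ltn_trans n4.
have o2 : (2 < n)%N by apply: leq_ltn_trans n4.
have o3 : (3 < n)%N by apply: leq_ltn_trans n4.
pose i0 := Ordinal o0. pose i1 := Ordinal o1. pose i2 := Ordinal o2.
pose i3 := Ordinal o3. pose i4 := Ordinal n4.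
pose F0 : 'M[R]_n := 4%:R^-1 *: (Dl i0 i1 i2 i3 + Dl i0 i1 i2 i4 + Dl i0 i1 i3 i4
   + Dl i0 i2 i3 i4 + Dl i1 i2 i3 i4) - Dl i1 i2 i3 i4.
have LF0 : L F0.
  apply: (LB); last exact: (LDm).
  apply: (LZ); apply: (LD); last exact: (LDm).
  apply: (LD); last exact: (LDm).
  apply: (LD); last exact: (LDm).
  by apply: (LD); exact: (LDm).
have F0sym : F0^T = F0.
  by rewrite /F0 linearB linearZ /= !linearD /= !Dl_sym.
have F0diag : forall x, F0 x x = (x == i0)%:R.
  move=> x; rewrite /F0 !mxE !Dl_diag //.
  set b0 := (x == i0)%:R; set b1 := (x == i1)%:R; set b2 := (x == i2)%:R.
  set b3 := (x == i3)%:R; set b4 := (x == i4)%:R.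
  by field.
pose F a := perm_act (tperm i0 a) F0.
have LF : forall a, L (F a) by move=> a; exact: (Lperm).
have Fsym : forall a x y, F a x y = F a y x.
  move=> a x y; have := congr1 (fun M : 'M[R]_n => M x y) (perm_act_sym (tperm i0 a) F0sym).
  by rewrite /= mxE.
have Fdiag : forall a x, F a x x = (x == a)%:R.
  move=> a x; rewrite /F perm_actE tpermV F0diag.
  by rewrite -[X in _ == X](tpermR i0 a) (inj_eq perm_inj).
move=> Q [QT QL].
pose X := \sum_a Q a a *: F a.
have LX : L X by apply: (Lsum) => a; exact: (LZ).
have XT : X^T = X.
  apply/matrixP => x y; rewrite mxE !summxE; apply: eq_bigr => a _.
  by rewrite [LHS]mxE [RHS]mxE Fsym.
have -> : Q = (Q - X) + X by rewrite subrK.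
apply: (LD) => //; apply: (LW); split; [split|].
- by rewrite linearB /= QT XT.
- by rewrite /in_Ln mulmxBl QL (LLn _ LX) subrr.
- move=> x; rewrite !mxE summxE.
  rewrite (bigD1 x) //= big1 ?addr0.
    by rewrite [X in _ - X]mxE Fdiag eqxx mulr1 subrr.
  by move=> a hax; rewrite mxE Fdiag eq_sym (negbTE hax) mulr0.
Qed.
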